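(* Let $r\ge2$ and fix $\tilde{\mathbf z}=(z_2,\dots,z_r)^\intercal\in\Omega^{r-1}$. For any $2\le j\le r$, any non-negative integer $k$ and any $t\in\mathbb C_\infty$ with $|t|_\infty\le1$, \[\lim_{|z_1|_\infty=|\mathbf z|_i\to\infty}\sum'_{a_1,\dots,a_r\in A}\frac{a_j(t)}{(a_1z_1+\dots+a_rz_r)^{q^k}}=\sum'_{a_2,\dots,a_r\in A}\frac{a_j(t)}{(a_2z_2+\dots+a_rz_r)^{q^k}}.\]
   Context: Let $q$ be a prime power, $A=\mathbb F_q[\theta]$, $|\theta|_\infty=q$, $K_\infty=\mathbb F_q((1/\theta))$, $\mathbb C_\infty$ the completion of an algebraic closure of $K_\infty$; $a(t)$ is $a\in A$ with $\theta$ replaced by $t$. For $n\ge1$, $\Omega^n$ is the set of $(z_1,\dots,z_n)^\intercal\in\mathbb C_\infty^n$ with $K_\infty$-linearly independent entries and $z_n=1$. Here $\mathbf z=(z_1,\tilde{\mathbf z})=(z_1,z_2,\dots,z_r)^\intercal\in\Omega^r$, $|\mathbf z|_i=\inf\{|z_1-\alpha|_\infty:\alpha\in K_\infty z_2+\dots+K_\infty z_r\}$, and the limit is taken as $z_1$ varies (with $\tilde{\mathbf z}$ fixed, $\mathbf z\in\Omega^r$) subject to $|z_1|_\infty=|\mathbf z|_i$ and $|z_1|_\infty\to\infty$. $\sum'$ excludes the tuple with all entries zero. *)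

(* Defs.v *)
From HB Require Import structures.
From mathcomp Require Import all_boot all_order all_algebra.
From mathcomp Require Import classical_sets reals.
Set Implicit Arguments. Unset Strict Implicit. Unset Printing Implicit Defensive.
Import Order.TTheory GRing.Theory Num.Theory.
Local Open Scope ring_scope.
Local Open Scope classical_set_scope.

(* C plays the role of C_infty: an algebraically closed field C with an
   absolute value nrm : C -> R, a copy of F_q (F with #|F| = q) via iota,
   and theta in C.  See is_Cinfty below. *)
Section Cinf.
Variables (R : realType) (F : finFieldType) (C : closedFieldType)
  (iota : {rmorphism F -> C}) (nrm : C -> R) (theta : C).

(* a(x) for a in F[theta] = {poly F}, evaluated at x in C *)
Definition evalA (a : {poly F}) (x : C) : C := (map_poly iota a).[x].

Definition cvg_nrm (u : nat -> C) (v : C) : Prop :=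
  forall e : R, 0 < e -> exists N : nat, forall d, (N <= d)%N -> nrm (u d - v) < e.

Definition cauchy_nrm (u : nat -> C) : Prop :=
  forall e : R, 0 < e -> exists N : nat, forall m d, (N <= m)%N -> (N <= d)%N ->
    nrm (u m - u d) < e.

Definition in_Kinf (x : C) : Prop :=
  forall e : R, 0 < e -> exists a b : {poly F},
    b != 0 /\ nrm (x - evalA a theta / evalA b theta) < e.

Definition alg_over_Kinf (y : C) : Prop :=
  exists p : {poly C}, p != 0 /\ (forall i, in_Kinf p`_i) /\ root p y.

(* (C, nrm, iota, theta) is (isometrically) C_infty: complete non-archimedean
   absolutely valued algebraically closed field, |theta| = q, in which the
   algebraic closure of K_infty (closure of F_q(theta)) is dense. *)
Definition is_Cinfty : Prop :=
  (forall x, nrm x = 0 <-> x = 0) /\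
  (forall x y, nrm (x * y) = nrm x * nrm y) /\
  (forall x y, nrm (x + y) <= Num.max (nrm x) (nrm y)) /\
  (forall u, cauchy_nrm u -> exists v, cvg_nrm u v) /\
  nrm theta = (#|F|)%:R /\
  (forall x (e : R), 0 < e -> exists y, alg_over_Kinf y /\ nrm (x - y) < e).

Definition in_Omega (m : nat) (z : 'I_m.+1 -> C) : Prop :=
  (forall c : 'I_m.+1 -> C, (forall i, in_Kinf (c i)) ->
     \sum_i c i * z i = 0 -> forall i, c i = 0) /\ z ord_max = 1.

Definition zcons (m : nat) (z1 : C) (zt : 'I_m -> C) : 'I_m.+1 -> C :=
  fun i => if unlift ord0 i is Some i' then zt i' else z1.

Definition inorm (m : nat) (z1 : C) (zt : 'I_m -> C) : R :=
  inf [set nrm (z1 - \sum_i c i * zt i) |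
        c in [set c : 'I_m -> C | forall i, in_Kinf (c i)]].

Definition polyOf (d : nat) (f : {ffun 'I_d -> F}) : {poly F} :=
  \poly_(l < d) (if insub l is Some l' then f l' else 0).

(* partial sum over tuples (a_1..a_m) in A^m, all deg a_i < d, not all zero,
   of a_j(t) / (a_1 z_1 + ... + a_m z_m)^(q^k) *)
Definition psum (m : nat) (z : 'I_m -> C) (j : 'I_m) (k : nat) (t : C)
  (d : nat) : C :=
  \sum_(c : {ffun 'I_m -> {ffun 'I_d -> F}} | c != 0)
     evalA (polyOf (c j)) t /
     (\sum_i evalA (polyOf (c i)) theta * z i) ^+ (#|F| ^ k).

End Cinf.

(* Main.v *)
Require Import Defs.
From HB Require Import structures.
From mathcomp Require Import all_boot all_order all_algebra finfield.
From mathcomp Require Import classical_sets reals boolp.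
From mathcomp Require Import ring lra.
Import Order.TTheory GRing.Theory Num.Theory.
Local Open Scope ring_scope.
Set Implicit Arguments. Unset Strict Implicit. Unset Printing Implicit Defensive.

Section Main.
Variables (R : realType) (F : finFieldType) (C : closedFieldType)
  (iota : {rmorphism F -> C}) (nrm : C -> R) (theta : C).
Hypothesis HC : is_Cinfty iota nrm theta.

Lemma nrm_eq0 x : nrm x = 0 <-> x = 0. Proof. by move: HC => [h _]; apply: h. Qed.
Lemma nrmM x y : nrm (x * y) = nrm x * nrm y. Proof. by case: HC => _ []. Qed.
Lemma nrmD x y : nrm (x + y) <= Num.max (nrm x) (nrm y). Proof. by case: HC => _ [] _ []. Qed.
Lemma nrm_complete u : cauchy_nrm nrm u -> exists v, cvg_nrm nrm u v.
Proof. by move: HC => [_ [_ [_ [h _]]]]; apply: h. Qed.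
Lemma nrm_theta : nrm theta = (#|F|)%:R. Proof. by case: HC => _ [] _ [] _ [] _ []. Qed.

Lemma nrm0 : nrm 0 = 0. Proof. by apply/nrm_eq0. Qed.

Lemma nrm_ge0 x : 0 <= nrm x.
Proof.
have [y Hy] := @solve_monicpoly C 2 (fun i => if i == 0%N then x else 0) isT.
move: Hy; rewrite big_ord_recl big_ord1 /= mul0r addr0 mulr1 => <-.
by rewrite expr2 nrmM -expr2 sqr_ge0.
Qed.

Lemma nrm1 : nrm 1 = 1.
Proof.
have h : nrm 1 = nrm 1 * nrm 1 by rewrite -nrmM mulr1.
have h0 : nrm 1 != 0 by apply/eqP => /nrm_eq0 /eqP; rewrite oner_eq0.
by apply: (mulfI h0); rewrite mulr1 -h.
Qed.

Lemma nrmX x n : nrm (x ^+ n) = nrm x ^+ n.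
Proof. by elim: n => [|n IH]; rewrite ?expr0 ?nrm1 // !exprS nrmM IH. Qed.

Lemma nrmN1 : nrm (-1) = 1.
Proof.
have h : nrm (-1) ^+ 2 = 1 by rewrite -nrmX sqrrN expr1n nrm1.
have := nrm_ge0 (-1); move: h.
move=> /eqP; rewrite sqrf_eq1 => /orP[/eqP //|/eqP ->]; lra.
Qed.

Lemma nrmN x : nrm (- x) = nrm x.
Proof. by rewrite -mulN1r nrmM nrmN1 mul1r. Qed.

Lemma nrmB x y : nrm (x - y) = nrm (y - x).
Proof. by rewrite -nrmN opprB. Qed.

Lemma nrmV x : nrm (x^-1) = (nrm x)^-1.
Proof.
have [->|x0] := eqVneq x 0; first by rewrite invr0 nrm0 invr0.
have h : nrm x * nrm x^-1 = 1 by rewrite -nrmM mulfV // nrm1.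
have nx : nrm x != 0 by apply/eqP => /nrm_eq0 /eqP; rewrite (negPf x0).
by rewrite -[RHS]mulr1 -h mulrA mulVf // mul1r.
Qed.

Lemma nrmD_le x y e : nrm x <= e -> nrm y <= e -> nrm (x + y) <= e.
Proof. move=> hx hy; apply: le_trans (nrmD x y) _; by rewrite ge_max hx hy. Qed.

Lemma nrmD_lt x y e : nrm x < e -> nrm y < e -> nrm (x + y) < e.
Proof. move=> hx hy; apply: le_lt_trans (nrmD x y) _; by rewrite gt_max hx hy. Qed.

Lemma nrm_sum_le (I : Type) (r : seq I) (P : pred I) (f : I -> C) e :
  0 <= e -> (forall i, P i -> nrm (f i) <= e) -> nrm (\sum_(i <- r | P i) f i) <= e.
Proof.
move=> e0 h; elim/big_rec: _ => [|i x Pi hx]; first by rewrite nrm0.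
by apply: nrmD_le => //; apply: h.
Qed.

Lemma nrmD_eq x y : nrm y < nrm x -> nrm (x + y) = nrm x.
Proof.
move=> hyx; apply/eqP; rewrite eq_le; apply/andP; split.
  by apply: le_trans (nrmD x y) _; rewrite ge_max lexx ltW.
have : nrm x <= Num.max (nrm (x + y)) (nrm (- y)).
  by rewrite -{1}(addrK y x); apply: nrmD.
rewrite nrmN le_max => /orP[//|h]; lra.
Qed.


Local Notation q := (#|F|).
Local Notation qR := ((#|F|)%:R : R).

Lemma q_gt1 : (1 < q)%N. Proof. exact: finNzRing_gt1. Qed.
Lemma qR_gt1 : 1 < qR. Proof. by rewrite ltr1n q_gt1. Qed.

Lemma nrm_iota c : c != 0 -> nrm (iota c) = 1.
Proof.
move=> c0.
have hx : nrm (iota c) != 0.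
  by apply/eqP => /nrm_eq0 /eqP; rewrite fmorph_eq0 (negPf c0).
have h : nrm (iota c) ^+ q.-1.+1 = nrm (iota c) ^+ 1.
  by rewrite prednK ?(ltn_trans _ q_gt1) // -nrmX -rmorphXn expf_card expr1.
have h2 : nrm (iota c) * nrm (iota c) ^+ q.-1 = nrm (iota c) * 1.
  by rewrite -exprS h expr1 mulr1.
have /eqP := mulfI hx h2.
rewrite pexpr_eq1 ?nrm_ge0 //; first by move/eqP.
by rewrite -subn1 subn_gt0 q_gt1.
Qed.

Lemma nrm_iota_le c : nrm (iota c) <= 1.
Proof. have [->|c0] := eqVneq c 0; by rewrite ?rmorph0 ?nrm0 ?ler01 ?nrm_iota. Qed.

Lemma evalA_MXC p c x : evalA iota (p * 'X + c%:P) x = evalA iota p x * x + iota c.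
Proof. by rewrite /evalA rmorphD rmorphM /= map_polyX map_polyC !hornerE. Qed.

Lemma evalA0 x : evalA iota 0 x = 0.
Proof. by rewrite /evalA rmorph0 horner0. Qed.

Lemma evalA1 x : evalA iota 1 x = 1.
Proof. by rewrite /evalA rmorph1 hornerC. Qed.

Lemma evalA_le1 a t : nrm t <= 1 -> nrm (evalA iota a t) <= 1.
Proof.
move=> ht; elim/poly_ind: a => [|p c IH]; first by rewrite evalA0 nrm0 ler01.
rewrite evalA_MXC; apply: nrmD_le; last exact: nrm_iota_le.
rewrite nrmM; have := nrm_ge0 t; have := nrm_ge0 (evalA iota p t); nra.
Qed.

Lemma evalA_theta a : a != 0 -> nrm (evalA iota a theta) = qR ^+ (size a).-1.
Proof.
elim/poly_ind: a => [|p c IH]; first by rewrite eqxx.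
move=> H; rewrite evalA_MXC size_MXaddC.
have [p0|p0] := eqVneq p 0.
  subst p; rewrite /= evalA0 mul0r add0r.
  have [c0|c0] := eqVneq c 0; first by move: H; rewrite c0 mul0r add0r eqxx.
  by rewrite /= size_poly0 nrm_iota // expr0.
rewrite /= nrmD_eq; last first.
  rewrite nrmM IH // nrm_theta; apply: le_lt_trans (nrm_iota_le c) _.
  rewrite -exprSr; apply: exprn_egt1 => //; exact: qR_gt1.
by rewrite nrmM IH // nrm_theta -exprSr prednK // size_poly_gt0.
Qed.

Lemma evalA_theta_ge1 a : a != 0 -> 1 <= nrm (evalA iota a theta).
Proof. by move=> a0; rewrite evalA_theta // exprn_ege1 // ltW // qR_gt1. Qed.

Lemma evalA_theta_neq0 a : a != 0 -> evalA iota a theta != 0.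
Proof.
move=> a0; apply/eqP => /nrm_eq0 h; have := evalA_theta_ge1 a0.
by rewrite h ler10.
Qed.


Local Notation Kin := (in_Kinf iota nrm theta).

Lemma evalAM p r x : evalA iota (p * r) x = evalA iota p x * evalA iota r x.
Proof. by rewrite /evalA rmorphM hornerM. Qed.
Lemma evalAD p r x : evalA iota (p + r) x = evalA iota p x + evalA iota r x.
Proof. by rewrite /evalA rmorphD hornerD. Qed.
Lemma evalAN p x : evalA iota (- p) x = - evalA iota p x.
Proof. by rewrite /evalA rmorphN hornerN. Qed.

Lemma Kin_ratio a b : Kin (evalA iota a theta / evalA iota b theta).
Proof.
move=> e e0; have [b0|b0] := eqVneq b 0.
  exists 0, 1; split; first by rewrite oner_neq0.
  by rewrite b0 !evalA0 invr0 !mul0r mulr0 subr0 nrm0.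
by exists a, b; split => //; rewrite subrr nrm0.
Qed.

Lemma Kin_evalA a : Kin (evalA iota a theta).
Proof. by have := Kin_ratio a 1; rewrite evalA1 divr1. Qed.

Lemma Kin0 : Kin 0. Proof. by have := Kin_evalA 0; rewrite evalA0. Qed.
Lemma Kin1 : Kin 1. Proof. by have := Kin_evalA 1; rewrite evalA1. Qed.

Lemma Kin_closed x : (forall e, 0 < e -> exists y, Kin y /\ nrm (x - y) < e) -> Kin x.
Proof.
move=> h e e0; have [y [Ky hy]] := h e e0.
have [a [b [b0 hab]]] := Ky e e0; exists a, b; split => //.
by rewrite -(subrK y x) -addrA; apply: nrmD_lt.
Qed.

Lemma Kin_opp x : Kin x -> Kin (- x).
Proof.
move=> Kx e e0; have [a [b [b0 hab]]] := Kx e e0; exists (- a), b; split => //.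
by rewrite evalAN mulNr -opprD nrmN.
Qed.

Lemma Kin_add x y : Kin x -> Kin y -> Kin (x + y).
Proof.
move=> Kx Ky e e0; have [a [b [b0 hab]]] := Kx e e0.
have [a' [b' [b0' hab']]] := Ky e e0.
exists (a * b' + a' * b), (b * b'); split; first by rewrite mulf_neq0.
have B0 := evalA_theta_neq0 b0; have B0' := evalA_theta_neq0 b0'.
have -> : evalA iota (a * b' + a' * b) theta / evalA iota (b * b') theta =
  evalA iota a theta / evalA iota b theta + evalA iota a' theta / evalA iota b' theta.
  by rewrite evalAD !evalAM; field; rewrite B0 B0'.
set r := _ / _ in hab; set s := _ / _ in hab'.
have -> : x + y - (r + s) = (x - r) + (y - s) by ring.
exact: nrmD_lt.
Qed.

Lemma Kin_sub x y : Kin x -> Kin y -> Kin (x - y).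
Proof. by move=> Kx Ky; apply: Kin_add => //; apply: Kin_opp. Qed.

Lemma Kin_mul x y : Kin x -> Kin y -> Kin (x * y).
Proof.
move=> Kx Ky e e0.
set D := nrm x + nrm y + 1.
have D0 : 0 < D by rewrite /D; have := nrm_ge0 x; have := nrm_ge0 y; lra.
set eps := e / (D + e).
have De : 0 < D + e by lra.
have epsD : eps * (D + e) = e by rewrite /eps mulfVK // gt_eqF.
have eps0 : 0 < eps by rewrite /eps divr_gt0.
have eps1 : eps < 1 by nra.
have [a [b [b0 hab]]] := Kx eps eps0.
have [a' [b' [b0' hab']]] := Ky eps eps0.
exists (a * a'), (b * b'); split; first by rewrite mulf_neq0.
have B0 := evalA_theta_neq0 b0; have B0' := evalA_theta_neq0 b0'.
have -> : evalA iota (a * a') theta / evalA iota (b * b') theta =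
  (evalA iota a theta / evalA iota b theta) * (evalA iota a' theta / evalA iota b' theta).
  by rewrite !evalAM; field; rewrite B0 B0'.
set r := _ / _ in hab; set s := _ / _ in hab'.
have -> : x * y - r * s = x * (y - s) + (x - r) * s by ring.
have hs : nrm s <= nrm y + eps.
  have := nrmD y (s - y); rewrite addrC subrK nrmB.
  have := nrm_ge0 y; have := nrm_ge0 (y - s).
  move=> h1 h2 h3; apply: le_trans h3 _; rewrite ge_max; apply/andP; split; lra.
apply: nrmD_lt; rewrite nrmM.
  have h1 : nrm x * nrm (y - s) <= nrm x * eps.
    by apply: ler_wpM2l; [apply: nrm_ge0 | apply: ltW].
  apply: le_lt_trans h1 _.
  have := nrm_ge0 x; have := nrm_ge0 y; rewrite /D in epsD; nra.
have h1 : nrm (x - r) * nrm s <= eps * nrm s.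
  by apply: ler_wpM2r; [apply: nrm_ge0 | apply: ltW].
have h2 : eps * nrm s <= eps * (nrm y + eps) by apply: ler_wpM2l; [apply: ltW|].
apply: le_lt_trans h1 _; apply: le_lt_trans h2 _.
have := nrm_ge0 x; have := nrm_ge0 y; rewrite /D in epsD; nra.
Qed.

Lemma Kin_inv x : Kin x -> Kin (x^-1).
Proof.
move=> Kx; have [->|x0] := eqVneq x 0; first by rewrite invr0; apply: Kin0.
have nx : 0 < nrm x.
  by rewrite lt_def nrm_ge0 andbT; apply/eqP => h; move/nrm_eq0: h => /eqP; rewrite (negPf x0).
move=> e e0.
set eps := e * nrm x ^+ 2 / (1 + e * nrm x).
have d0 : 0 < 1 + e * nrm x by nra.
have epsD : eps * (1 + e * nrm x) = e * nrm x ^+ 2 by rewrite /eps mulfVK // gt_eqF.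
have eps0 : 0 < eps by rewrite /eps divr_gt0 // mulr_gt0 // exprn_gt0.
have [a [b [b0 hab]]] := Kx eps eps0.
set r := _ / _ in hab.
have epsx : eps < nrm x by rewrite expr2 in epsD; nra.
have nr : nrm r = nrm x.
  by rewrite -(subrK x r) addrC nrmD_eq // nrmB; apply: lt_trans hab _.
have r0 : r != 0 by apply/eqP => r0; move: nr; rewrite r0 nrm0 => h; move: nx; rewrite -h ltxx.
have a0 : a != 0 by apply: contraNneq r0 => a0; rewrite /r a0 evalA0 mul0r.
have B0 := evalA_theta_neq0 b0; have A0 := evalA_theta_neq0 a0.
exists b, a; split => //.
have -> : evalA iota b theta / evalA iota a theta = r^-1 by rewrite /r invf_div.
have -> : x^-1 - r^-1 = (r - x) / (x * r) by field; rewrite x0 r0.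
rewrite nrmM nrmV nrmM nr nrmB.
rewrite ltr_pdivrMr ?mulr_gt0 //.
apply: lt_le_trans hab _; rewrite expr2 in epsD; nra.
Qed.

Lemma Kin_div x y : Kin x -> Kin y -> Kin (x / y).
Proof. by move=> Kx Ky; apply: Kin_mul => //; apply: Kin_inv. Qed.


Lemma nrm_sum_lt (I : Type) (r : seq I) (P : pred I) (f : I -> C) e :
  0 < e -> (forall i, P i -> nrm (f i) < e) -> nrm (\sum_(i <- r | P i) f i) < e.
Proof.
move=> e0 h; elim/big_rec: _ => [|i x Pi hx]; first by rewrite nrm0.
by apply: nrmD_lt => //; apply: h.
Qed.

Lemma arch_inv (e : R) : 0 < e -> exists N : nat, (N.+1%:R)^-1 < e.
Proof.
move=> e0; exists (Num.bound e^-1).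
have h : e^-1 < (Num.bound e^-1)%:R by apply: archi_boundP; rewrite invr_ge0 ltW.
rewrite invf_plt ?posrE //; apply: lt_trans h _; by rewrite ltr_nat.
Qed.

Lemma fin_pos (I : finType) (P : I -> R -> Prop) :
  (forall i k k', 0 < k' -> k' <= k -> P i k -> P i k') ->
  (forall i, exists2 k, 0 < k & P i k) -> exists2 k, 0 < k & forall i, P i k.
Proof.
move=> mono h.
suff [k k0 hk] : exists2 k, 0 < k & forall i, i \in enum I -> P i k.
  by exists k => // i; apply: hk; rewrite mem_enum.
elim: (enum I) => [|i s [k k0 hk]]; first by exists 1.
have [k1 k10 hk1] := h i.
exists (Num.min k k1); first by rewrite lt_min k0 k10.
move=> j; rewrite inE => /orP[/eqP ->|js].
  by apply: (mono _ k1) => //; [rewrite lt_min k0 k10 | rewrite ge_min lexx orbT].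
by apply: (mono _ k) => //; [rewrite lt_min k0 k10 | rewrite ge_min lexx | apply: hk].
Qed.

Lemma fin_N (I : finType) (P : I -> nat -> Prop) :
  (forall i N N', (N <= N')%N -> P i N -> P i N') ->
  (forall i, exists N, P i N) -> exists N, forall i, P i N.
Proof.
move=> mono h.
suff [N hN] : exists N, forall i, i \in enum I -> P i N.
  by exists N => i; apply: hN; rewrite mem_enum.
elim: (enum I) => [|i s [N hN]]; first by exists 0%N.
have [N1 hN1] := h i.
exists (maxn N N1) => j; rewrite inE => /orP[/eqP ->|js].
  by apply: (mono _ N1) => //; rewrite leq_maxr.
by apply: (mono _ N) => //; [rewrite leq_maxl | apply: hN].
Qed.

Definition indep m (z : 'I_m -> C) := forall c : 'I_m -> C, (forall i, Kin (c i)) ->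
  \sum_i c i * z i = 0 -> forall i, c i = 0.

Lemma sum_lift m (i0 : 'I_m.+1) (f : 'I_m.+1 -> C) :
  \sum_i f i = f i0 + \sum_(i < m) f (lift i0 i).
Proof. by rewrite (bigD1_ord i0) //. Qed.

Lemma indep_lift m (z : 'I_m.+1 -> C) (i0 : 'I_m.+1) :
  indep z -> indep (fun i => z (lift i0 i)).
Proof.
move=> hz c' Kc' hs i.
pose c j := if unlift i0 j is Some j' then c' j' else 0.
have Kc : forall j, Kin (c j).
  by move=> j; rewrite /c; case: unliftP => [j' _|_]; [apply: Kc' | apply: Kin0].
have := hz c Kc; rewrite (sum_lift i0) /c unlift_none mul0r add0r.
under eq_bigr do rewrite liftK.
by move=> /(_ hs (lift i0 i)); rewrite liftK.
Qed.


Lemma dist_pos m (z : 'I_m.+1 -> C) (i0 : 'I_m.+1) (k' : R) :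
  indep z -> 0 < k' ->
  (forall b : 'I_m -> C, (forall i, Kin (b i)) -> forall i,
      k' * nrm (b i) <= nrm (\sum_i b i * z (lift i0 i))) ->
  exists2 d, 0 < d & forall b : 'I_m -> C, (forall i, Kin (b i)) ->
      d <= nrm (z i0 + \sum_i b i * z (lift i0 i)).
Proof.
move=> hz k0 hk; apply: contrapT => hneg.
have h : forall n : nat, exists b : 'I_m -> C, (forall i, Kin (b i)) /\
    nrm (z i0 + \sum_i b i * z (lift i0 i)) < (n.+1%:R)^-1.
  move=> n; apply: contrapT => hn; apply: hneg; exists (n.+1%:R)^-1; first by rewrite invr_gt0 ltr0Sn.
  move=> b Kb; rewrite leNgt; apply/negP => hlt; apply: hn; by exists b.
have [f hf] := choice h.
pose u n := z i0 + \sum_i f n i * z (lift i0 i).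
have cau : forall i, cauchy_nrm nrm (fun n => f n i).
  move=> i e e0; have [N hN] := arch_inv (mulr_gt0 k0 e0); exists N => n p hn hp.
  have K : forall i, Kin (f n i - f p i).
    by move=> j; apply: Kin_sub; [case: (hf n) | case: (hf p)] => + _; apply.
  have := hk _ K i.
  have -> : \sum_j (f n j - f p j) * z (lift i0 j) = u n - u p.
    by rewrite /u opprD addrACA subrr add0r -sumrB; apply: eq_bigr => j _; rewrite mulrBl.
  have hu : nrm (u n - u p) < (N.+1%:R)^-1.
    apply: nrmD_lt; last rewrite nrmN.
      case: (hf n) => _ h1; apply: lt_le_trans h1 _.
      by rewrite lef_pV2 ?posrE ?ler_nat ?ltr0Sn.
    case: (hf p) => _ h1; apply: lt_le_trans h1 _.
    by rewrite lef_pV2 ?posrE ?ler_nat ?ltr0Sn.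
  move=> h1; have h2 := le_lt_trans h1 (lt_trans hu hN).
  by rewrite ltr_pM2l in h2.
have [beta hbeta] := choice (fun i => nrm_complete (cau i)).
have Kbeta : forall i, Kin (beta i).
  move=> i; apply: Kin_closed => e e0; have [N hN] := hbeta i e e0.
  exists (f N i); split; first by case: (hf N) => + _; apply.
  by rewrite nrmB; apply: hN.
set X := z i0 + \sum_i beta i * z (lift i0 i).
have X0 : X = 0.
  apply/eqP; apply: contraT => Xn0.
  have e0 : 0 < nrm X.
    by rewrite lt_def nrm_ge0 andbT; apply/eqP => h1; move/nrm_eq0: h1 => /eqP; rewrite (negPf Xn0).
  have [N1 hN1] : exists N, forall i, forall n, (N <= n)%N ->
      nrm (f n i - beta i) < nrm X / (nrm (z (lift i0 i)) + 1).
    apply: (fin_N (P := fun i N => forall n, (N <= n)%N ->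
      nrm (f n i - beta i) < nrm X / (nrm (z (lift i0 i)) + 1))).
      by move=> i N N' hNN' hP n hn; apply: hP; apply: leq_trans hn.
    move=> i; apply: hbeta; apply: divr_gt0 => //.
    by have := nrm_ge0 (z (lift i0 i)); lra.
  have [N2 hN2] := arch_inv e0.
  pose n := maxn N1 N2.
  have : nrm X < nrm X; last by rewrite ltxx.
  have hX : X = (X - u n) + u n by rewrite subrK.
  rewrite {1}hX; apply: nrmD_lt.
    have -> : X - u n = \sum_i (beta i - f n i) * z (lift i0 i).
      rewrite /X /u opprD addrACA subrr add0r -sumrB; apply: eq_bigr => j _.
      by rewrite mulrBl.
    apply: nrm_sum_lt => // i _; rewrite nrmM nrmB.
    have h1 := hN1 i n (leq_maxl _ _).
    have hz0 := nrm_ge0 (z (lift i0 i)).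
    have hz1 : 0 < nrm (z (lift i0 i)) + 1 by lra.
    rewrite ltr_pdivlMr // in h1.
    have := nrm_ge0 (f n i - beta i); nra.
  case: (hf n) => _ h1; apply: lt_le_trans h1 _; apply: ltW; apply: le_lt_trans hN2.
  by rewrite lef_pV2 ?posrE ?ler_nat ?ltr0Sn // ltnS leq_maxr.
pose c j := if unlift i0 j is Some j' then beta j' else 1.
have Kc : forall j, Kin (c j).
  by move=> j; rewrite /c; case: unliftP => [j' _|_]; [apply: Kbeta | apply: Kin1].
have := hz c Kc; rewrite (sum_lift i0) /c unlift_none mul1r.
under eq_bigr do rewrite liftK.
move=> /(_ X0 i0); rewrite unlift_none => /eqP; by rewrite oner_eq0.
Qed.


Lemma key m (z : 'I_m -> C) : indep z ->
  exists2 k, 0 < k & forall a : 'I_m -> C, (forall i, Kin (a i)) -> forall i,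
    k * nrm (a i) <= nrm (\sum_i a i * z i).
Proof.
elim: m z => [|m IH] z hz; first by exists 1 => // a _ [].
suff [k k0 hk] : exists2 k, 0 < k & forall i, forall a : 'I_m.+1 -> C,
    (forall i, Kin (a i)) -> k * nrm (a i) <= nrm (\sum_i a i * z i).
  by exists k => // a Ka i; apply: hk.
apply: (fin_pos (P := fun i k => forall a : 'I_m.+1 -> C, (forall i, Kin (a i)) ->
    k * nrm (a i) <= nrm (\sum_i a i * z i))).
  move=> i k k' k'0 hk' hP a Ka; apply: le_trans (hP a Ka).
  by apply: ler_wpM2r => //; apply: nrm_ge0.
move=> i0.
have [kk kk0 hkk] := IH _ (@indep_lift _ _ i0 hz).
have [d d0 hd] := dist_pos hz kk0 hkk.
exists d => // a Ka.
have [a0|a0] := eqVneq (a i0) 0; first by rewrite a0 nrm0 mulr0 nrm_ge0.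
pose b i := a (lift i0 i) / a i0.
have Kb : forall i, Kin (b i) by move=> i; apply: Kin_div.
have -> : \sum_i a i * z i = a i0 * (z i0 + \sum_i b i * z (lift i0 i)).
  rewrite (sum_lift i0) mulrDr mulr_sumr; congr (_ + _); apply: eq_bigr => j _.
  by rewrite /b mulrA [a i0 * _]mulrC divfK.
rewrite nrmM mulrC; apply: ler_wpM2l; [exact: nrm_ge0 | exact: hd].
Qed.


Definition gf d (f : {ffun 'I_d -> F}) (l : nat) : F :=
  if insub l is Some l' then f l' else 0.

Lemma polyOf_coef d (f : {ffun 'I_d -> F}) l : (polyOf f)`_l = gf f l.
Proof.
rewrite /polyOf coef_poly /gf; case: ltnP => // hl.
by rewrite insubF // ltnNge hl.
Qed.

Lemma gf_val d (f : {ffun 'I_d -> F}) (l : 'I_d) : gf f (val l) = f l.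
Proof. by rewrite /gf valK. Qed.

Definition rs d d' (f : {ffun 'I_d -> F}) : {ffun 'I_d' -> F} :=
  [ffun l : 'I_d' => gf f (val l)].

Lemma gf_rs d d' (f : {ffun 'I_d -> F}) l :
  gf (rs d' f) l = if (l < d')%N then gf f l else 0.
Proof.
rewrite /gf; case: insubP => [l' hl vl|hl]; first by rewrite hl ffunE vl.
by rewrite (negPf hl).
Qed.

Lemma polyOf_rs d d' (f : {ffun 'I_d -> F}) : (d <= d')%N -> polyOf (rs d' f) = polyOf f.
Proof.
move=> hd; apply/polyP => l; rewrite !polyOf_coef gf_rs.
case: ltnP => // hl; rewrite /gf insubF //; apply/negbTE; rewrite -leqNgt.
exact: leq_trans hd hl.
Qed.

Lemma rsK d d' (f : {ffun 'I_d -> F}) : (d <= d')%N -> rs d (rs d' f) = f.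
Proof.
move=> hd; apply/ffunP => l; rewrite ffunE gf_rs gf_val.
by rewrite (leq_trans (ltn_ord l) hd).
Qed.

Lemma rs0 d d' : rs d' (0 : {ffun 'I_d -> F}) = 0.
Proof.
apply/ffunP => l; rewrite !ffunE /gf; case: insubP => [l' _ _|_] //.
by rewrite ffunE.
Qed.

Lemma nrm_polyOf_big d d' (f : {ffun 'I_d' -> F}) (l : 'I_d') :
  (d <= l)%N -> f l != 0 -> qR ^+ d <= nrm (evalA iota (polyOf f) theta).
Proof.
move=> hl fl.
have hs : (l < size (polyOf f))%N.
  rewrite ltnNge; apply/negP => h; move: fl; rewrite -gf_val -polyOf_coef nth_default //. by rewrite eqxx.
have p0 : polyOf f != 0 by apply: gt_size_poly_neq0 hs.
rewrite evalA_theta //; apply: ler_weXn2l; first exact: ltW qR_gt1.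
by rewrite -ltnS prednK ?(leq_ltn_trans hl hs) // (leq_ltn_trans _ hs).
Qed.

Lemma qR_pow d : (d.+1)%:R <= qR ^+ d.
Proof.
elim: d => [|d IH]; first by rewrite expr0.
rewrite exprS.
have q2 : 2 <= qR by rewrite ler_nat q_gt1.
have h0 : 0 <= d%:R :> R by apply: ler0n.
move: IH; rewrite -[(d.+2)%:R]natr1 -[(d.+1)%:R]natr1 => IH.
have h1 : 2 * qR ^+ d <= qR * qR ^+ d by apply: ler_wpM2r => //; lra.
lra.
Qed.


Definition Gt m (z : 'I_m -> C) (j : 'I_m) (k : nat) (t : C) (a : 'I_m -> {poly F}) : C :=
  evalA iota (a j) t / (\sum_i evalA iota (a i) theta * z i) ^+ (q ^ k).

Lemma psumE m (z : 'I_m -> C) j k t d :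
  psum iota theta z j k t d =
  \sum_(c : {ffun 'I_m -> {ffun 'I_d -> F}} | c != 0) Gt z j k t (fun i => polyOf (c i)).
Proof. by []. Qed.

Lemma Gt_bound m (z : 'I_m -> C) j k t a (X : R) : nrm t <= 1 -> 1 <= X ->
  X <= nrm (\sum_i evalA iota (a i) theta * z i) -> nrm (Gt z j k t a) <= X^-1.
Proof.
move=> ht X1 hX; rewrite /Gt nrmM nrmV nrmX.
set S := nrm _ in hX *.
have S1 : 1 <= S by apply: le_trans hX.
have hSn : X <= S ^+ (q ^ k) by apply: le_trans hX (ler_eXnr _ S1); rewrite expn_gt0 (ltn_trans _ q_gt1).
have X0 : 0 < X by apply: lt_le_trans X1; rewrite ltr01.
have Sn0 : 0 < S ^+ (q ^ k) by apply: lt_le_trans hSn.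
have := evalA_le1 (a j) ht; have := nrm_ge0 (evalA iota (a j) t).
set N := nrm _ => h0 h1.
have : (S ^+ (q ^ k))^-1 <= X^-1 by rewrite lef_pV2 ?posrE.
have : 0 <= (S ^+ (q ^ k))^-1 by rewrite invr_ge0 ltW.
nra.
Qed.


Lemma psum_diff m (z : 'I_m -> C) j k t (kap : R) d d' :
  0 < kap ->
  (forall a : 'I_m -> C, (forall i, Kin (a i)) -> forall i,
    kap * nrm (a i) <= nrm (\sum_i a i * z i)) ->
  nrm t <= 1 -> (d <= d')%N -> 1 <= kap * qR ^+ d ->
  nrm (psum iota theta z j k t d' - psum iota theta z j k t d) <= (kap * qR ^+ d)^-1.
Proof.
move=> kap0 hk ht hd hY; rewrite !psumE.
pose EXT (c : {ffun 'I_m -> {ffun 'I_d -> F}}) : {ffun 'I_m -> {ffun 'I_d' -> F}} :=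
  [ffun i => rs d' (c i)].
pose TR (c : {ffun 'I_m -> {ffun 'I_d' -> F}}) : {ffun 'I_m -> {ffun 'I_d -> F}} :=
  [ffun i => rs d (c i)].
have TRK : forall c, TR (EXT c) = c.
  by move=> c; apply/ffunP => i; rewrite !ffunE rsK.
have EXT0 : forall c, (EXT c != 0) = (c != 0).
  move=> c; apply/negbRL; rewrite negbK; apply/eqP/eqP => [h|->].
    rewrite -(TRK c) h; apply/ffunP => i; by rewrite !ffunE rs0.
  by apply/ffunP => i; rewrite !ffunE rs0.
rewrite (bigID (fun c' : {ffun 'I_m -> {ffun 'I_d' -> F}} => c' == EXT (TR c'))) /=.
have -> : \sum_(c' : {ffun 'I_m -> {ffun 'I_d' -> F}} | (c' != 0) && (c' == EXT (TR c')))
      Gt z j k t (fun i => polyOf (c' i)) =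
    \sum_(c : {ffun 'I_m -> {ffun 'I_d -> F}} | c != 0) Gt z j k t (fun i => polyOf (c i)).
  rewrite (reindex_onto EXT TR); last by move=> c' /andP[_ /eqP <-].
  apply: eq_big => [c|c _]; first by rewrite TRK !eqxx !andbT EXT0.
  congr Gt; apply: funext => i; by rewrite ffunE polyOf_rs.
rewrite addrAC subrr add0r.
apply: nrm_sum_le; first by rewrite invr_ge0; apply: le_trans hY.
move=> c' /andP[_ hne].
have : [exists i, exists l : 'I_d', (d <= l)%N && (c' i l != 0)].
  move: hne; apply: contraNT => /existsPn h; apply/eqP/ffunP => i; apply/ffunP => l.
  rewrite !ffunE gf_rs gf_val; case: ltnP => hl //.
  by have /existsPn /(_ l) := h i; rewrite hl /= negbK => /eqP.
move=> /existsP [i /existsP [l /andP [hl hc]]].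
apply: Gt_bound => //.
have h1 := hk _ (fun i => Kin_evalA (polyOf (c' i))) i.
apply: le_trans h1; apply: ler_wpM2l; first exact: ltW.
exact: nrm_polyOf_big hl hc.
Qed.


Lemma psum_cauchy_aux (kap : R) (e : R) : 0 < kap -> 0 < e ->
  exists N : nat, forall n, (N <= n)%N -> 1 <= kap * qR ^+ n /\ (kap * qR ^+ n)^-1 < e.
Proof.
move=> k0 e0; set mu := Num.min 1 e.
have mu0 : 0 < mu by rewrite lt_min ltr01 e0.
have mu1 : mu <= 1 by rewrite ge_min lexx.
have mue : mu <= e by rewrite ge_min lexx orbT.
have [N hN] := arch_inv (mulr_gt0 k0 mu0).
exists N => n hn.
have hN1 : 0 < (N.+1)%:R :> R by rewrite ltr0Sn.
have hA : 1 < kap * (N.+1)%:R * mu.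
  have hw : (N.+1%:R)^-1 * (N.+1)%:R = 1 :> R by rewrite mulVf // gt_eqF.
  have hp : 0 < (kap * mu - (N.+1%:R)^-1) * (N.+1)%:R by rewrite mulr_gt0 // subr_gt0.
  rewrite mulrBl hw in hp; rewrite mulrAC; lra.
have hle : kap * (N.+1)%:R <= kap * qR ^+ n.
  apply: ler_wpM2l; first exact: ltW.
  by apply: le_trans (qR_pow n); rewrite ler_nat.
set A := kap * (N.+1)%:R in hA hle.
have A0 : 0 < A by rewrite mulr_gt0.
have A1 : 1 <= A by nra.
split; first exact: le_trans hle.
have B0 : 0 < kap * qR ^+ n by apply: lt_le_trans hle.
apply: le_lt_trans (_ : A^-1 < e); first by rewrite lef_pV2 ?posrE.
apply: lt_le_trans mue.
have hAi : A^-1 * A = 1 by rewrite mulVf // gt_eqF.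
have Ai0 : 0 < A^-1 by rewrite invr_gt0.
nra.
Qed.


Lemma psum_cvg m (z : 'I_m -> C) j k t : indep z -> nrm t <= 1 ->
  exists v, cvg_nrm nrm (psum iota theta z j k t) v.
Proof.
move=> hz ht; apply: nrm_complete => e e0.
have [kap kap0 hk] := key hz.
have [N hN] := psum_cauchy_aux kap0 e0.
exists N => n p hn hp.
have [hnp|hpn] := leqP n p.
  have [h1 h2] := hN n hn; rewrite nrmB.
  by apply: le_lt_trans h2; apply: psum_diff.
have [h1 h2] := hN p hp.
by apply: le_lt_trans h2; apply: psum_diff => //; apply: ltnW.
Qed.


Lemma polyOf0 d : polyOf (0 : {ffun 'I_d -> F}) = 0.
Proof.
apply/polyP => l; rewrite polyOf_coef coef0 /gf; case: insubP => [l' _ _|_] //.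
by rewrite ffunE.
Qed.

Lemma polyOf_eq0 d (f : {ffun 'I_d -> F}) : polyOf f = 0 -> f = 0.
Proof.
move=> h; apply/ffunP => l; by rewrite ffunE -gf_val -polyOf_coef h coef0.
Qed.

Lemma inorm_le m (z1 : C) (zt : 'I_m -> C) (b : 'I_m -> C) : (forall i, Kin (b i)) ->
  inorm iota nrm theta z1 zt <= nrm (z1 - \sum_i b i * zt i).
Proof.
move=> Kb; apply: ge_inf.
  by exists 0 => y [c _ <-]; apply: nrm_ge0.
by exists b.
Qed.

Lemma psum_split m (zt : 'I_m -> C) z1 j k t d : nrm t <= 1 -> 1 <= nrm z1 ->
  nrm z1 = inorm iota nrm theta z1 zt ->
  nrm (psum iota theta (zcons z1 zt) (lift ord0 j) k t d - psum iota theta zt j k t d)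
    <= (nrm z1)^-1.
Proof.
move=> ht z11 hz1; rewrite !psumE.
rewrite (bigID (fun c : {ffun 'I_m.+1 -> {ffun 'I_d -> F}} => c ord0 == 0)) /=.
pose h (c : {ffun 'I_m -> {ffun 'I_d -> F}}) : {ffun 'I_m.+1 -> {ffun 'I_d -> F}} :=
  [ffun i => if unlift ord0 i is Some i' then c i' else 0].
pose h' (c : {ffun 'I_m.+1 -> {ffun 'I_d -> F}}) : {ffun 'I_m -> {ffun 'I_d -> F}} :=
  [ffun i => c (lift ord0 i)].
have hK : forall c, h' (h c) = c by move=> c; apply/ffunP => i; rewrite !ffunE liftK.
have h0 : forall c, h c ord0 = 0 by move=> c; rewrite ffunE unlift_none.
have hn0 : forall c, (h c != 0) = (c != 0).
  move=> c; apply/negbRL; rewrite negbK; apply/eqP/eqP => [e|->].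
    rewrite -(hK c) e; apply/ffunP => i; by rewrite !ffunE.
  apply/ffunP => i; rewrite !ffunE; by case: unliftP => [i' _|_]; rewrite ?ffunE.
have -> : \sum_(c : {ffun 'I_m.+1 -> {ffun 'I_d -> F}} | (c != 0) && (c ord0 == 0))
    Gt (zcons z1 zt) (lift ord0 j) k t (fun i => polyOf (c i)) =
    \sum_(c : {ffun 'I_m -> {ffun 'I_d -> F}} | c != 0) Gt zt j k t (fun i => polyOf (c i)).
  rewrite (reindex_onto h h'); last first.
    move=> c /andP[_ /eqP c0]; apply/ffunP => i; rewrite !ffunE.
    by case: unliftP => [i' ->|->] //; rewrite ffunE.
  apply: eq_big => [c|c _]; first by rewrite hK eqxx andbT h0 eqxx andbT hn0.
  rewrite /Gt big_ord_recl h0 polyOf0 evalA0 mul0r add0r ffunE liftK.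
  congr (_ / _ ^+ _); apply: eq_bigr => i _; by rewrite ffunE liftK /zcons liftK.
rewrite addrAC subrr add0r.
have z10 : 0 < nrm z1 by apply: lt_le_trans z11; rewrite ltr01.
apply: nrm_sum_le; first by rewrite invr_ge0 ltW.
move=> c /andP[_ hc0].
apply: Gt_bound => //.
rewrite big_ord_recl.
have p0 : polyOf (c ord0) != 0 by apply: contra hc0 => /eqP /polyOf_eq0 ->.
set A0 := evalA iota (polyOf (c ord0)) theta.
have A0n : A0 != 0 by apply: evalA_theta_neq0.
pose b (i : 'I_m) := - (evalA iota (polyOf (c (lift ord0 i))) theta / A0).
have Kb : forall i, Kin (b i) by move=> i; apply: Kin_opp; apply: Kin_ratio.
have -> : A0 * zcons z1 zt ord0 +
    \sum_(i < m) evalA iota (polyOf (c (lift ord0 i))) theta * zcons z1 zt (lift ord0 i)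
    = A0 * (z1 - \sum_i b i * zt i).
  rewrite /zcons unlift_none mulrBr -mulrN -sumrN mulr_sumr; congr (_ + _).
  apply: eq_bigr => i _; rewrite liftK /b; field; exact: A0n.
rewrite nrmM; have := @inorm_le _ z1 zt _ Kb; rewrite -hz1 => hi.
have := evalA_theta_ge1 p0; rewrite -/A0 => hA.
have := nrm_ge0 (z1 - \sum_i b i * zt i); nra.
Qed.

End Main.

Unset Implicit Arguments.

Theorem proposition3p9 (R : realType) (F : finFieldType) (C : closedFieldType)
  (iota : {rmorphism F -> C}) (nrm : C -> R) (theta : C)
  (HC : is_Cinfty iota nrm theta)
  (n : nat) (zt : 'I_n.+1 -> C) (hzt : in_Omega iota nrm theta zt)
  (j : 'I_n.+1) (k : nat) (t : C) (ht : nrm t <= 1) :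
  exists L : C,
    cvg_nrm nrm (psum iota theta zt j k t) L /\
    forall e : R, 0 < e -> exists M : R, forall z1 : C,
      in_Omega iota nrm theta (zcons z1 zt) ->
      nrm z1 = inorm iota nrm theta z1 zt ->
      M < nrm z1 ->
      exists v : C,
        cvg_nrm nrm (psum iota theta (zcons z1 zt) (lift ord0 j) k t) v /\
        nrm (v - L) < e.
Proof.
have [L hL] := psum_cvg HC j k hzt.1 ht.
exists L; split => // e e0.
exists (e^-1 + 1) => z1 hO hz1 hM.
have [v hv] := psum_cvg HC (lift ord0 j) k hO.1 ht.
exists v; split => //.
have ei0 : 0 < e^-1 by rewrite invr_gt0.
have z11 : 1 <= nrm z1 by apply: ltW; apply: le_lt_trans hM; lra.
have z10 : 0 < nrm z1 by lra.
have hz : (nrm z1)^-1 < e.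
  rewrite invf_plt ?posrE //; lra.
have [N1 hN1] := hv e e0.
have [N2 hN2] := hL e e0.
pose d := maxn N1 N2.
have hs := psum_split HC j k d ht z11 hz1.
have -> : v - L = (v - psum iota theta (zcons z1 zt) (lift ord0 j) k t d) +
   ((psum iota theta (zcons z1 zt) (lift ord0 j) k t d - psum iota theta zt j k t d) +
    (psum iota theta zt j k t d - L)) by ring.
apply: (nrmD_lt HC); first by rewrite (nrmB HC); apply: hN1; rewrite leq_maxl.
apply: (nrmD_lt HC); first exact: le_lt_trans hs hz.
by apply: hN2; rewrite leq_maxr.
Qed.
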